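(* Let $a\neq\pm1$ be a square-free integer and let $F$ be a finite Galois extension of $\mathbb{Q}$. Then there exists an integer $N$ such that whenever $a$ is an $m$th power in the compositum $F\cdot\mathbb{Q}^{\mathrm{ab}}$ (for a positive integer $m$), $m$ divides $N$.
   Context: $\mathbb{Q}^{\mathrm{ab}}$ denotes the maximal abelian extension of $\mathbb{Q}$ in a fixed algebraic closure containing $F$. *)

(* Defs.v *)
From HB Require Import structures.
From mathcomp Require Import all_boot all_order all_algebra all_field.
Set Implicit Arguments. Unset Strict Implicit. Unset Printing Implicit Defensive.
Import Order.TTheory GRing.Theory Num.Theory.
Local Open Scope ring_scope.

Definition subsetC := algC -> Prop.

Definition is_subfield (S : subsetC) : Prop :=
  [/\ S 0, S 1,
      (forall x y, S x -> S y -> S (x + y)),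
      (forall x, S x -> S (- x)) &
      ((forall x y, S x -> S y -> S (x * y)) /\
       (forall x, S x -> x != 0 -> S (x^-1)))].

Definition finite_over_Q (S : subsetC) : Prop :=
  exists s : seq algC, forall x, S x ->
    exists c : seq rat, x = \sum_(i < size s) ratr c`_i * s`_i.

Definition normal_over_Q (S : subsetC) : Prop :=
  forall (p : {poly rat}) (x : algC), irreducible_poly p -> S x ->
    root (map_poly ratr p) x ->
    forall y : algC, root (map_poly ratr p) y -> S y.

(* Finite Galois extension of Q inside algC (separability is automatic in
   characteristic 0). *)
Definition finite_galois_over_Q (K : subsetC) : Prop :=
  [/\ is_subfield K, finite_over_Q K & normal_over_Q K].

Definition field_aut_of (K : subsetC) (g : algC -> algC) : Prop :=
  [/\ (forall x, K x -> K (g x)),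
      (forall x y, K x -> K y -> g (x + y) = g x + g y),
      (forall x y, K x -> K y -> g (x * y) = g x * g y),
      g 1 = 1 &
      ((forall x y, K x -> K y -> g x = g y -> x = y) /\
       (forall y, K y -> exists2 x, K x & g x = y))].

Definition abelian_aut (K : subsetC) : Prop :=
  forall g h, field_aut_of K g -> field_aut_of K h ->
    forall x, K x -> g (h x) = h (g x).

(* Q^ab: the maximal abelian extension of Q in algC, i.e. the union of all
   finite abelian Galois extensions of Q inside algC. *)
Definition Qab : subsetC :=
  fun x => exists K : subsetC,
    [/\ finite_galois_over_Q K, abelian_aut K & K x].

Definition compositum (A B : subsetC) : subsetC :=
  fun x => forall S : subsetC, is_subfield S ->
    (forall y, A y -> S y) -> (forall y, B y -> S y) -> S x.

(* Square-free integers (0 is not square-free). *)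
Definition squarefree_int (a : int) : Prop :=
  forall d : int, (d * d %| a)%Z -> `|d| = 1.

(* Main.v *)
Require Import Defs.
From HB Require Import structures.
From mathcomp Require Import all_boot all_order all_algebra all_field.
From mathcomp Require Import zify.
Import Order.TTheory GRing.Theory Num.Theory.
Local Open Scope ring_scope.
Local Notation QtoC := (ratr : rat -> algC).
Local Notation pQtoC := (map_poly (ratr : rat -> algC)).
Lemma conj_aut (y z : algC) : root (minCpoly y) z ->
  exists nu : {rmorphism algC -> algC}, nu y = z.
Proof.
move=> rz.
have [p [Dp mon_p] dv_p] := minCpolyP y.
have [rs Drs] := closed_field_poly_normal (minCpoly y).
rewrite (monicP (minCpoly_monic y)) scale1r in Drs.
have [Qs [QsC [s1 Ds1 gen]]] := num_field_exists rs.
have yin : y \in rs by rewrite -root_prod_XsubC -Drs root_minCpoly.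
have zin : z \in rs by rewrite -root_prod_XsubC -Drs.
move: yin; rewrite -Ds1 => /mapP[yn _ Dy].
move: zin; rewrite -Ds1 => /mapP[zn _ Dz].
pose phi := kHomExtend 1 \1 yn zn.
have homQn1: kHom 1 1 (\1%VF : 'End(Qs)) by rewrite kHom1.
have pzn: root (map_poly \1%VF (minPoly 1 yn)) zn.
  rewrite -(fmorph_root QsC) -Dz -map_poly_comp.
  rewrite (@eq_map_poly _ _ _ QsC) => [|a]; last by rewrite /= id_lfunE.
  set p1 := map_poly _ _.
  have [q1 Dp1]: exists q1, p1 = pQtoC q1.
    have aP i: (minPoly 1 yn)`_i \in 1%VS.
      by apply/polyOverP; apply: minPolyOver.
    have{aP} a_ i := sig_eqW (vlineP _ _ (aP i)).
    exists (\poly_(i < size (minPoly 1 yn)) sval (a_ i)).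
    apply/polyP=> i; rewrite coef_poly coef_map coef_poly /=.
    case: ifP => _; rewrite ?rmorph0 //; case: (a_ i) => a /= ->.
    by rewrite alg_num_field fmorph_rat.
  have: root p1 y by rewrite Dy fmorph_root root_minPoly.
  rewrite Dp1 dv_p.
  case/dvdpP=> r1 ->; rewrite rmorphM rootM /= -Dp; apply/orP; right; exact: rz.
have homphi := kHomExtendP (subvv 1%VS) homQn1 pzn.
pose pr := map_poly (in_alg Qs) p.
have Qpr: pr \is a polyOver 1%VS.
  by apply/polyOverP=> i; rewrite coef_map memvZ ?memv_line.
have split1 : splittingFieldFor 1 pr fullv.
  exists s1 => //.
  congr (_ %= _): (eqpxx pr); apply/(map_poly_inj QsC).
  rewrite -map_poly_comp (@eq_map_poly _ _ _ QtoC); last first.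
    by move=> a /=; rewrite rmorphZ_num rmorph1 mulr1.
  rewrite -Dp Drs -Ds1 big_map rmorph_prod /=; apply: eq_bigr => zz _.
  by rewrite map_polyXsubC.
have splitE : splittingFieldFor <<1; yn>>%AS pr fullv.
  exact: splittingFieldForS (sub1v _) (subvf _) split1.
have [g homg Dg] := kHom_extends (sub1v _) homphi Qpr splitE.
have gm : monoid_morphism g by apply/kHom_monoid_morphism.
pose gmM := GRing.isMonoidMorphism.Build _ _ g gm.
pose gRM : {rmorphism _ -> _} := HB.pack (fun_of_lfun g) gmM.
have [nu Dnu] := extend_algC_subfield_aut QsC gRM.
exists nu; rewrite Dy -Dnu /= -Dg ?memv_adjoin //.
by rewrite /phi (kHomExtend_val homQn1 pzn).
Qed.
Lemma minCpoly_pow (m b l : nat) (r : algC) : (0 < m)%N -> prime l ->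
  logn l b = 1%N -> r ^+ m = b%:R -> forall z, z ^+ m = b%:R -> root (minCpoly r) z.
Proof.
move=> m0 pl lb rm z zm.
have b0 : (0 < b)%N by case: b lb rm zm => [|]; rewrite ?logn0.
have [p [Dp mon_p] dv_p] := minCpolyP r.
pose q : {poly rat} := 'X^m - (b%:R)%:P.
have qr : root (pQtoC q) r.
  by rewrite /root rmorphB /= map_polyXn map_polyC /= !hornerE rm ratr_nat subrr.
have dpq : (p %| q)%R by rewrite -dv_p.
have [rs Drs] := closed_field_poly_normal (minCpoly r).
rewrite (monicP (minCpoly_monic r)) scale1r in Drs.
have rsm : forall w, w \in rs -> w ^+ m = b%:R.
  move=> w wr; have : root (pQtoC q) w.
    move/dvdpP: dpq => [u ->]; rewrite rmorphM rootM /= -Dp Drs root_prod_XsubC wr orbT //.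
  by rewrite /root rmorphB /= map_polyXn map_polyC /= !hornerE ratr_nat subr_eq0 => /eqP.
set d := size rs.
have c0 : `|(minCpoly r)`_0| ^+ m = b%:R ^+ d.
  rewrite Drs coef0_prod_XsubC normrM normr_sign mul1r normr_prod -prodrXl.
  rewrite (eq_big_seq (fun _ => b%:R ^+ 1)) ?prodrXr ?sum1_size // => w wr.
  by rewrite -normrX rsm // expr1 normr_nat.
rewrite Dp coef_map /= -ratr_norm -rmorphXn -(ratr_nat _ b) -rmorphXn in c0.
move/fmorph_inj: c0 => c0.
set q0 := p`_0 in c0.
pose N := `|numq q0|%N; pose D := `|denq q0|%N.
have Dq0 : `|q0| = N%:R / D%:R.
  by rewrite [LHS]normqE /N /D !natr_absz [`|denq q0|]gtr0_norm ?denq_gt0.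
have D0 : (0 < D)%N by rewrite /D absz_gt0 denq_neq0.
have eq1 : (N ^ m)%:R = (b ^ d * D ^ m)%:R :> rat.
  move: c0; rewrite Dq0 expr_div_n => /(congr1 (fun t => t * D%:R ^+ m)).
  rewrite divfK; last first.
    by rewrite expf_neq0 // pnatr_eq0; move: D0; case: (D).
  move=> e.
  by rewrite natrM !natrX e.
have eq2 : (N ^ m = b ^ d * D ^ m)%N by apply/eqP; rewrite -(eqr_nat rat) eq1.
have N0 : (0 < N)%N.
  rewrite lt0n; apply/eqP => N0; move: eq2; rewrite N0 exp0n //.
  move=> /esym /eqP; rewrite muln_eq0 !expn_eq0.
  by move: b0 D0 m0; case: (b); case: (D); case: (m).
have eq3 : (m * logn l N = d + m * logn l D)%N.
  by rewrite -lognX eq2 lognM ?expn_gt0 ?b0 ?D0 // !lognX lb muln1.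
have md : (m %| d)%N.
  have := dvdn_mulr (logn l N) (dvdnn m); rewrite eq3.
  by rewrite (dvdn_addl d (dvdn_mulr (logn l D) (dvdnn m))).
have sp : size (minCpoly r) = (size p) by rewrite Dp size_map_poly.
have sq : size q = m.+1 by rewrite size_XnsubC.
have q0' : q != 0 by rewrite -size_poly_eq0 sq.
have dle : (size p <= size q)%N by apply: dvdp_leq.
have dsz : size (minCpoly r) = d.+1 by rewrite Drs size_prod_XsubC.
have d0 : (0 < d)%N by have := size_minCpoly r; rewrite dsz.
have dm : d = m.
  apply/eqP; rewrite eqn_leq (dvdn_leq d0 md) andbT.
  by move: dle; rewrite -sp dsz sq.
have pq : p = q.
  apply/eqP; rewrite -eqp_monic //; last exact: monicXnsubC.
  by rewrite -dvdp_size_eqp // -sp dsz sq dm.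
rewrite Dp pq /root rmorphB /= map_polyXn map_polyC /= !hornerE zm ratr_nat subrr //.
Qed.
Lemma iter_rmorph (nu : {rmorphism algC -> algC}) k :
  exists mu : {rmorphism algC -> algC}, forall x, mu x = iter k nu x.
Proof.
elim: k => [|k [mu Dmu]]; first by exists (idfun : {rmorphism algC -> algC}).
by exists (nu \o mu : {rmorphism algC -> algC}) => x /=; rewrite Dmu.
Qed.

Lemma iter_mul_fix (T : Type) (f : T -> T) x t q :
  iter t f x = x -> iter (t * q) f x = x.
Proof.
move=> H; elim: q => [|q IH]; first by rewrite muln0.
by rewrite mulnS iterD IH H.
Qed.

Lemma iter_inj (T : Type) (f : T -> T) k : injective f -> injective (iter k f).
Proof.
move=> fi; elim: k => [//|k IH] x y /= /fi; exact: IH.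
Qed.

Lemma aut_iter_fix (w : algC) : exists j, (0 < j)%N /\
  forall nu : {rmorphism algC -> algC}, iter j nu w = w.
Proof.
have [rs Drs] := closed_field_poly_normal (minCpoly w).
rewrite (monicP (minCpoly_monic w)) scale1r in Drs.
exists (size rs)`!; split; first exact: fact_gt0.
move=> nu.
have mi i : minCpoly (iter i nu w) = minCpoly w.
  by elim: i => //= i IH; rewrite minCpoly_aut.
have inrs i : iter i nu w \in rs.
  by rewrite -root_prod_XsubC -Drs -(mi i) root_minCpoly.
pose s := [seq iter i nu w | i <- iota 0 (size rs).+1].
have nu_s : ~~ uniq s.
  apply/negP => us; have := uniq_leq_size us.
  have sub : {subset s <= rs} by move=> y /mapP[i _ ->]; apply: inrs.
  by move/(_ rs sub); rewrite size_map size_iota ltnn.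
have [i [j [ij js eqij]]] := uniqPn 0 nu_s.
move: js; rewrite size_map size_iota => js.
move: eqij; rewrite !(nth_map 0%N) ?size_iota ?(ltn_trans ij) // !nth_iota ?(ltn_trans ij) // !add0n.
rewrite -(subnKC (ltnW ij)) iterD => /esym /(@iter_inj _ _ i (fmorph_inj nu)) Hj.
have t0 : (0 < j - i)%N by rewrite subn_gt0.
have [q ->] : exists q, (size rs)`! = ((j - i) * q)%N.
  exists ((size rs)`! %/ (j - i))%N; rewrite mulnC divnK // dvdn_fact // t0 /=.
  by rewrite -ltnS (leq_ltn_trans (leq_subr _ _) js).
exact: iter_mul_fix.
Qed.

Lemma F_fix (F : algC -> Prop) : finite_over_Q F -> exists k, (0 < k)%N /\
  forall (nu : {rmorphism algC -> algC}) y, F y -> iter k nu y = y.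
Proof.
move=> [s Hs].
have [k [k0 Hk]] : exists k, (0 < k)%N /\ forall (nu : {rmorphism algC -> algC}) i,
    (i < size s)%N -> iter k nu s`_i = s`_i.
  elim: s {Hs} => [|w s [k [k0 Hk]]]; first by exists 1%N.
  have [j [j0 Hj]] := aut_iter_fix w.
  exists (j * k)%N; split; first by rewrite muln_gt0 j0.
  move=> nu [|i] /=; first by move=> _; apply: iter_mul_fix; apply: Hj.
  by rewrite ltnS mulnC => /(Hk nu) H; apply: iter_mul_fix.
exists k; split => // nu y /Hs [c ->].
have [mu Dmu] := iter_rmorph nu k.
rewrite -Dmu rmorph_sum; apply: eq_bigr => i _.
by rewrite rmorphM fmorph_rat Dmu Hk.
Qed.

Lemma minpoly_irr (y : algC) : exists p : {poly rat},
  [/\ minCpoly y = pQtoC p, irreducible_poly p & root (pQtoC p) y].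
Proof.
have [p [Dp mon_p] dv_p] := minCpolyP y.
have rz0 : root (pQtoC p) y by rewrite dv_p.
have nz_r : p != 0 by apply: monic_neq0.
exists p; split => //.
by apply/(subfx_irreducibleP rz0 nz_r)=> q qz0 nzq; rewrite dvdp_leq // -dv_p.
Qed.

Lemma aut_K (K : algC -> Prop) (nu : {rmorphism algC -> algC}) :
  normal_over_Q K -> forall y, K y -> K (nu y).
Proof.
move=> NK y Ky; have [p [Dp irr ry]] := minpoly_irr y.
apply: (NK p y) => //.
by rewrite -Dp -(minCpoly_aut nu) root_minCpoly.
Qed.

Lemma field_aut_K (K : algC -> Prop) (nu : {rmorphism algC -> algC}) :
  normal_over_Q K -> field_aut_of K nu.
Proof.
move=> NK; split.
- exact: aut_K.
- by move=> x y _ _; rewrite rmorphD.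
- by move=> x y _ _; rewrite rmorphM.
- exact: rmorph1.
split; first by move=> x y _ _; apply: fmorph_inj.
move=> y Ky; exists (algC_invaut nu y); last exact: algC_invautK.
exact: (aut_K K (algC_invaut nu : {rmorphism algC -> algC}) NK).
Qed.

Definition comm (s t : {rmorphism algC -> algC}) : {rmorphism algC -> algC} :=
  (s \o (t \o (algC_invaut s \o algC_invaut t))).

Lemma commE s t x : comm s t x = s (t (algC_invaut s (algC_invaut t x))).
Proof. by []. Qed.

Lemma comm_fix_K (K : algC -> Prop) s t : finite_galois_over_Q K -> abelian_aut K ->
  forall y, K y -> comm s t y = y.
Proof.
move=> [_ _ NK] AK y Ky; rewrite commE.
have Kw : K (algC_invaut t y) by apply: (aut_K K (algC_invaut t : {rmorphism algC -> algC}) NK).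
rewrite (AK t (algC_invaut s) (field_aut_K K t NK)
   (field_aut_K K (algC_invaut s : {rmorphism algC -> algC}) NK) _ Kw).
by rewrite !algC_invautK.
Qed.

Lemma comm_fix_unity s t n (w : algC) : (0 < n)%N -> w ^+ n = 1 -> comm s t w = w.
Proof.
move=> n0 wn; rewrite commE.
have wn' : algC_invaut t w ^+ n = 1 by rewrite -rmorphXn wn rmorph1.
rewrite (aut_unity_rootC t (algC_invaut s : {rmorphism algC -> algC}) n0 wn').
by rewrite !algC_invautK.
Qed.

Lemma iter_fix (T : Type) (f : T -> T) k x : f x = x -> iter k f x = x.
Proof. by move=> H; elim: k => //= k ->. Qed.

Definition Sfix k (y : algC) := forall s t, iter k (comm s t) y = y.

Lemma S_subfield k : is_subfield (Sfix k).
Proof.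
split.
- by move=> s t; have [mu Dmu] := iter_rmorph (comm s t) k; rewrite -Dmu rmorph0.
- by move=> s t; have [mu Dmu] := iter_rmorph (comm s t) k; rewrite -Dmu rmorph1.
- move=> x y Hx Hy s t; have [mu Dmu] := iter_rmorph (comm s t) k.
  by rewrite -Dmu rmorphD !Dmu Hx Hy.
- move=> x Hx s t; have [mu Dmu] := iter_rmorph (comm s t) k.
  by rewrite -Dmu rmorphN !Dmu Hx.
split.
- move=> x y Hx Hy s t; have [mu Dmu] := iter_rmorph (comm s t) k.
  by rewrite -Dmu rmorphM !Dmu Hx Hy.
- move=> x Hx _ s t; have [mu Dmu] := iter_rmorph (comm s t) k.
  by rewrite -Dmu fmorphV !Dmu Hx.
Qed.

Theorem mainTheorem13 (a : int) (F : algC -> Prop) :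
  squarefree_int a -> a != 1 -> a != -1 ->
  finite_galois_over_Q F ->
  exists N : nat, (0 < N)%N /\
    forall m : nat, (0 < m)%N ->
      (exists x : algC, compositum F Qab x /\ x ^+ m = a%:~R) ->
      (m %| N)%N.
Proof.
move=> sqa a1 aN1 [FS Ffin FN].
have [k [k0 Hk]] := F_fix F Ffin.
exists (2 * k)%N; split; first by rewrite muln_gt0 k0.
move=> m m0 [x [cx xm]].
have Sx : Sfix k x.
  apply: cx; first exact: S_subfield.
    by move=> y Fy s t; apply: Hk.
  move=> y [K [GK AK Ky]] s t; apply: iter_fix; exact: (comm_fix_K K s t GK AK y Ky).
have a0 : a != 0.
  apply/eqP => a0; have := sqa 2; rewrite a0 dvdz0 => /(_ isT) /eqP.
  by rewrite normr_nat.
pose b := `|a|%N.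
have b1 : (1 < b)%N by rewrite /b; lia.
have b0 : (0 < b)%N by apply: ltnW.
pose l := pdiv b.
have pl : prime l by apply: pdiv_prime.
have lb : logn l b = 1%N.
  have lb1 : (1 <= logn l b)%N by rewrite -pfactor_dvdn ?expn1 ?pdiv_dvd.
  apply/eqP; rewrite eqn_leq lb1 andbT leqNgt; apply/negP => lb2.
  have : (l ^ 2 %| b)%N by rewrite pfactor_dvdn.
  move=> dl; have := sqa (l%:Z).
  rewrite dvdzE abszM /= => H.
  have dl' : (l * l %| `|a|)%N by move: dl; rewrite expnS expn1.
  have := H dl' => h.
  have l1 : l = 1%N by lia.
  by move: pl; rewrite l1.
pose r := m.-root (b%:R : algC).
have rm : r ^+ m = b%:R by rewrite /r rootCK.
have r0 : 0 <= r by rewrite /r rootC_ge0 // ler0n.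
have bnz : (b%:R : algC) != 0 by rewrite pnatr_eq0 -lt0n.
have rnz : r != 0 by apply: contraNneq bnz => r0'; rewrite -rm r0' expr0n gtn_eqF.
have anz : (a%:~R : algC) != 0 by rewrite intr_eq0.
have xnz : x != 0 by apply: contraNneq anz => x0; rewrite -xm x0 expr0n gtn_eqF.
pose u := r / x.
have u2m : u ^+ (2 * m) = 1.
  rewrite mulnC exprM expr_div_n rm xm expr_div_n.
  have -> : (b%:R : algC) ^+ 2 = a%:~R ^+ 2.
    by rewrite /b natr_absz intr_norm intr_normK ?rpred_int.
  by rewrite divff // expf_neq0.
have Su : Sfix k u.
  move=> s t; apply: iter_fix; apply: (comm_fix_unity s t (2 * m)%N) => //.
  by rewrite muln_gt0.
have Sr : Sfix k r.
  have -> : r = x * u by rewrite /u mulrC divfK.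
  by have [_ _ _ _ [SM _]] := S_subfield k; apply: SM.
have [z pz] := C_prim_root_exists m0.
have zm : z ^+ m = 1 := prim_expr_order pz.
have znz : z != 0 by apply: contra_eq_neq zm => ->; rewrite expr0n gtn_eqF // eq_sym oner_eq0.
have [rho Drho] : exists rho : {rmorphism algC -> algC}, rho r = z * r.
  apply: conj_aut; apply: (minCpoly_pow _ _ _ _ m0 pl lb rm).
  by rewrite exprMn zm mul1r.
pose c := (Num.Def.conjC : {rmorphism algC -> algC}).
have cr : c r = r by apply: geC0_conj.
pose th := comm rho c.
have thz : th z = z by apply: (comm_fix_unity _ _ _ _ m0 zm).
have thr : th r = z ^+ 2 * r.
  rewrite /th commE.
  have -> : algC_invaut c r = r by rewrite -{1}cr algC_autK.
  set w := algC_invaut rho r.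
  have rw : rho w = r by rewrite /w algC_invautK.
  have wm : w ^+ m = b%:R by rewrite /w -rmorphXn rm rmorph_nat.
  have wr : (w / r) ^+ m = 1 by rewrite expr_div_n wm rm divff.
  have [j Dj] := prim_rootP pz wr.
  have Dw : w = z ^+ j * r by rewrite -Dj divfK.
  have rzm : (rho z) ^+ m = 1 by rewrite -rmorphXn zm rmorph1.
  have [e De] := prim_rootP pz rzm.
  have ej : (z ^+ e) ^+ j * z = 1.
    apply: (mulIf rnz); rewrite mul1r -mulrA -Drho.
    by rewrite -[X in _ = X]rw Dw rmorphM rmorphXn De.
  have cz : c z = z^-1.
    have nz1 : `|z| = 1.
      by apply/eqP; rewrite -(pexpr_eq1 m0) ?normr_ge0 // -normrX zm normr1.
    by rewrite invC_norm nz1 expr1n invr1 mul1r.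
  rewrite Dw rmorphM rmorphXn cz cr rmorphM rmorphXn fmorphV De Drho exprVn.
  have -> : (z ^+ e) ^+ j = z^-1 by rewrite -[LHS]mulr1 -(mulfV znz) mulrA ej mul1r.
  by rewrite invrK mulrA -expr2.
have iter_th i : iter i th r = z ^+ (2 * i) * r.
  elim: i => [|i IH]; first by rewrite muln0 expr0 mul1r.
  rewrite iterS IH rmorphM rmorphXn thz thr mulrA -exprD.
  by rewrite mulnS addnC.
have := Sr rho c; rewrite -/th iter_th => /(congr1 (fun t => t / r)).
rewrite mulfK // divff // => /eqP.
by rewrite -(prim_order_dvd pz).
Qed.
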